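(* Let $p$ be an odd prime, $R=F_p+vF_p$ with $v^2=v$, $\theta=\lambda+v\mu$ ($\lambda,\mu\in F_p$) a unit of $R$, and let $C=vC_{1-v}\oplus(1-v)C_v$ be a $\theta$-constacyclic code of length $n$ over $R$. Suppose $C=\langle vh_1(x),(1-v)h_2(x)\rangle$ in $R[x]/\langle x^n-\theta\rangle$, where $h_1(x),h_2(x)\in F_p[x]$ are monic with $h_1(x)\mid x^n-(\lambda+\mu)$ and $h_2(x)\mid x^n-\lambda$. Then $C_{1-v}=[h_1(x)]$ and $C_v=[h_2(x)]$; that is, $h_1(x)$ and $h_2(x)$ are the generator polynomials of the constacyclic codes $C_{1-v}$ and $C_v$, respectively.
   Context: A $\theta$-constacyclic code of length $n$ over $R$ is an $R$-submodule of $R^n$ closed under $(c_0,\dots,c_{n-1})\mapsto(\theta c_{n-1},c_0,\dots,c_{n-2})$, identified with an ideal of $R[x]/\langle x^n-\theta\rangle$ via $(c_i)\mapsto\sum c_ix^i$; $\langle\cdot\rangle$ denotes the generated ideal. $C_v=\{b\in F_p^n : va+(1-v)b\in C\text{ for some }a\in F_p^n\}$, $C_{1-v}=\{a\in F_p^n : va+(1-v)b\in C\text{ for some }b\in F_p^n\}$. For a monic divisor $g(x)$ of $x^n-\alpha$ ($\alpha\in F_p^*$), $[g(x)]$ denotes the ideal of $F_p[x]/\langle x^n-\alpha\rangle$ generated by $g(x)$; the generator polynomial of an $\alpha$-constacyclic code over $F_p$ is the unique monic divisor $g$ of $x^n-\alpha$ with the code equal to $[g(x)]$. *)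

(* Defs.v *)
From HB Require Import structures.
From mathcomp Require Import all_boot all_order all_algebra.
From mathcomp Require Import ring.
Set Implicit Arguments. Unset Strict Implicit. Unset Printing Implicit Defensive.
Import Order.TTheory GRing.Theory.
Local Open Scope ring_scope.

(* The ring R = F_p + v F_p with v^2 = v.  An element (mkRv a b) stands for
   a + v b  (a, b in F_p).  Multiplication:
   (a1 + v b1)(a2 + v b2) = a1 a2 + v (a1 b2 + b1 a2 + b1 b2). *)
Record Rv (p : nat) := MkRv { rv0 : 'F_p ; rv1 : 'F_p }.

Section RvRing.
Variable p : nat.
Local Notation R := (Rv p).

Definition rv_pair (x : R) : ('F_p * 'F_p)%type := (rv0 x, rv1 x).
Definition pair_rv (z : ('F_p * 'F_p)%type) : R := MkRv z.1 z.2.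
Lemma rv_pairK : cancel rv_pair pair_rv. Proof. by case. Qed.

HB.instance Definition _ := Equality.copy R (can_type rv_pairK).
HB.instance Definition _ := Choice.copy R (can_type rv_pairK).
HB.instance Definition _ := Countable.copy R (can_type rv_pairK).
HB.instance Definition _ := Finite.copy R (can_type rv_pairK).

Definition rv_zero : R := MkRv 0 0.
Definition rv_opp (x : R) : R := MkRv (- rv0 x) (- rv1 x).
Definition rv_add (x y : R) : R := MkRv (rv0 x + rv0 y) (rv1 x + rv1 y).
Definition rv_one : R := MkRv 1 0.
Definition rv_mul (x y : R) : R :=
  MkRv (rv0 x * rv0 y) (rv0 x * rv1 y + rv1 x * rv0 y + rv1 x * rv1 y).

Lemma rv_eq (a b c d : 'F_p) : a = c -> b = d -> MkRv a b = MkRv c d.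
Proof. by move=> -> ->. Qed.

Lemma rv_addA : associative rv_add.
Proof. by case=> ? ? [? ?] [? ?]; apply: rv_eq => /=; ring. Qed.
Lemma rv_addC : commutative rv_add.
Proof. by case=> ? ? [? ?]; apply: rv_eq => /=; ring. Qed.
Lemma rv_add0 : left_id rv_zero rv_add.
Proof. by case=> ? ?; apply: rv_eq => /=; ring. Qed.
Lemma rv_addN : left_inverse rv_zero rv_opp rv_add.
Proof. by case=> ? ?; apply: rv_eq => /=; ring. Qed.

HB.instance Definition _ := GRing.isZmodule.Build R rv_addA rv_addC rv_add0 rv_addN.

Lemma rv_mulA : associative rv_mul.
Proof. by case=> ? ? [? ?] [? ?]; apply: rv_eq => /=; ring. Qed.
Lemma rv_mulC : commutative rv_mul.
Proof. by case=> ? ? [? ?]; apply: rv_eq => /=; ring. Qed.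
Lemma rv_mul1 : left_id rv_one rv_mul.
Proof. by case=> ? ?; apply: rv_eq => /=; ring. Qed.
Lemma rv_mulDl : left_distributive rv_mul rv_add.
Proof. by case=> ? ? [? ?] [? ?]; apply: rv_eq => /=; ring. Qed.
Lemma rv_one_neq0 : rv_one != rv_zero.
Proof. by apply/eqP => -[] /eqP; rewrite oner_eq0. Qed.

HB.instance Definition _ :=
  GRing.Zmodule_isComNzRing.Build R rv_mulA rv_mulC rv_mul1 rv_mulDl rv_one_neq0.

End RvRing.

Definition vR (p : nat) : Rv p := MkRv 0 1.
Definition embR (p : nat) (a : 'F_p) : Rv p := MkRv a 0.

Definition wpoly (T : nzRingType) (n : nat) (c : 'rV[T]_n) : {poly T} :=
  \sum_(i < n) c 0 i *: 'X^i.

(* The ideal of T[x]/<x^n - alpha> generated by the polynomials in gs, seen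
   as the set of words c of length n such that c(x) = sum_k a_k g_k
   modulo (x^n - alpha) for some polynomials a_k. *)
Definition gen_ideal (T : comNzRingType) (n : nat) (alpha : T)
    (gs : seq {poly T}) (c : 'rV[T]_n) : Prop :=
  exists (a : seq {poly T}) (q : {poly T}),
    size a = size gs /\
    wpoly c = \sum_(k < size gs) a`_k * gs`_k + q * ('X^n - alpha%:P).

Definition Cv (p n : nat) (C : {set 'rV[Rv p]_n}) : {set 'rV['F_p]_n} :=
  [set b : 'rV['F_p]_n | [exists a : 'rV['F_p]_n,
     (\row_i (vR p * embR (a 0 i) + (1 - vR p) * embR (b 0 i))) \in C]].
Definition C1v (p n : nat) (C : {set 'rV[Rv p]_n}) : {set 'rV['F_p]_n} :=
  [set a : 'rV['F_p]_n | [exists b : 'rV['F_p]_n,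
     (\row_i (vR p * embR (a 0 i) + (1 - vR p) * embR (b 0 i))) \in C]].

(* Main.v *)
Require Import Defs.
From HB Require Import structures.
From mathcomp Require Import all_boot all_order all_algebra.
From mathcomp Require Import ring.
Import GRing.Theory.
Local Open Scope ring_scope.

Section H.
Variable p : nat.
Definition phi1 (x : Rv p) : 'F_p := rv0 x + rv1 x.
Arguments phi1 : simpl never.
Definition phi0 (x : Rv p) : 'F_p := rv0 x.

Lemma phi1_z : zmod_morphism phi1.
Proof. by case=> ? ? [? ?]; rewrite /phi1 /=; ring. Qed.
Lemma phi1_m : monoid_morphism phi1.
Proof. split; first by rewrite /phi1 /= addr0. by case=> ? ? [? ?]; rewrite /phi1 /=; ring. Qed.
HB.instance Definition _ := GRing.isZmodMorphism.Build _ _ phi1 phi1_z.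
HB.instance Definition _ := GRing.isMonoidMorphism.Build _ _ phi1 phi1_m.
Lemma phi0_z : zmod_morphism phi0.
Proof. by case=> ? ? [? ?]. Qed.
Lemma phi0_m : monoid_morphism phi0.
Proof. by split => // [[? ?] [? ?]]. Qed.
HB.instance Definition _ := GRing.isZmodMorphism.Build _ _ phi0 phi0_z.
HB.instance Definition _ := GRing.isMonoidMorphism.Build _ _ phi0 phi0_m.
Lemma emb_z : zmod_morphism (@embR p).
Proof. by move=> x y; apply: rv_eq => /=; ring. Qed.
Lemma emb_m : monoid_morphism (@embR p).
Proof. by split => // x y; apply: rv_eq => /=; ring. Qed.
HB.instance Definition _ := GRing.isZmodMorphism.Build _ _ (@embR p) emb_z.
HB.instance Definition _ := GRing.isMonoidMorphism.Build _ _ (@embR p) emb_m.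

Lemma wpoly_map (S T : comNzRingType) (f : {rmorphism S -> T}) n (c : 'rV[S]_n) :
  map_poly f (wpoly c) = wpoly (map_mx f c).
Proof.
rewrite /wpoly rmorph_sum; apply: eq_bigr => i _.
by rewrite /= map_polyZ map_polyXn mxE.
Qed.

Lemma wpoly_row n (a b : 'rV['F_p]_n) :
  wpoly (\row_i (vR p * embR (a 0 i) + (1 - vR p) * embR (b 0 i))) =
  (vR p)%:P * map_poly (@embR p) (wpoly a) + (1 - vR p)%:P * map_poly (@embR p) (wpoly b).
Proof.
rewrite !wpoly_map /wpoly !mulr_sumr -big_split; apply: eq_bigr => i _.
rewrite !mxE /= -!mul_polyC !polyCD !polyCM polyCN polyC1; ring.
Qed.

Lemma phi1_emb (h : {poly 'F_p}) : map_poly phi1 (map_poly (@embR p) h) = h.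
Proof. by rewrite -map_poly_comp map_poly_id // => x _; rewrite /= /phi1 /= addr0. Qed.
Lemma phi0_emb (h : {poly 'F_p}) : map_poly phi0 (map_poly (@embR p) h) = h.
Proof. by rewrite -map_poly_comp map_poly_id. Qed.
End H.

Lemma map_gen (S T : comNzRingType) (f : {rmorphism S -> T}) n
  (A0 A1 q g1 g2 : {poly S}) e1 e2 th :
  map_poly f (A0 * (e1%:P * g1) + A1 * (e2%:P * g2) + q * ('X^n - th%:P)) =
  map_poly f A0 * ((f e1)%:P * map_poly f g1) + map_poly f A1 * ((f e2)%:P * map_poly f g2)
  + map_poly f q * ('X^n - (f th)%:P).
Proof. by rewrite !rmorphD !rmorphM rmorphB /= !map_polyC map_polyXn. Qed.

Lemma phi1_v p : phi1 p (vR p) = 1. Proof. by rewrite /phi1 /= add0r. Qed.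
Lemma phi1_1v p : phi1 p (1 - vR p) = 0. Proof. by rewrite /phi1 /=; ring. Qed.
Lemma phi1_th p (l m : 'F_p) : phi1 p (MkRv l m) = l + m. Proof. by []. Qed.
Lemma phi0_v p : phi0 p (vR p) = 0. Proof. by []. Qed.
Lemma phi0_1v p : phi0 p (1 - vR p) = 1. Proof. by rewrite /phi0 /=; ring. Qed.
Lemma phi0_th p (l m : 'F_p) : phi0 p (MkRv l m) = l. Proof. by []. Qed.

Lemma map_gen2 (S T : comNzRingType) (f : {rmorphism S -> T}) n
  (A q h : {poly S}) c :
  map_poly f (A * h + q * ('X^n - c%:P)) =
  map_poly f A * map_poly f h + map_poly f q * ('X^n - (f c)%:P).
Proof. by rewrite !rmorphD !rmorphM rmorphB /= !map_polyC map_polyXn. Qed.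

Lemma lift_gen (S : comNzRingType) n (e th c : S) (A h q : {poly S}) :
  e * th = e * c ->
  e%:P * (A * h + q * ('X^n - c%:P)) = A * (e%:P * h) + 0 + e%:P * q * ('X^n - th%:P).
Proof.
move=> H; have E : e%:P * th%:P = e%:P * c%:P by rewrite -!polyCM H.
rewrite addr0; apply/eqP; rewrite -subr_eq0; apply/eqP.
transitivity (q * (e%:P * th%:P - e%:P * c%:P)); first ring.
by rewrite E subrr mulr0.
Qed.

Lemma wpoly0 (T : nzRingType) n : wpoly (0 : 'rV[T]_n) = 0.
Proof. by rewrite /wpoly big1 // => i _; rewrite mxE scale0r. Qed.

Theorem theorem3p5 (p n : nat) (lam mu : 'F_p)
    (C : {set 'rV[Rv p]_n}) (h1 h2 : {poly 'F_p}) :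
  prime p -> odd p -> (0 < n)%N ->
  (exists u : Rv p, MkRv lam mu * u = 1) ->
  h1 \is monic -> h2 \is monic ->
  h1 %| 'X^n - (lam + mu)%:P -> h2 %| 'X^n - lam%:P ->
  (forall c, c \in C <->
     gen_ideal (MkRv lam mu)
       [:: (vR p)%:P * map_poly (@embR p) h1;
           (1 - vR p)%:P * map_poly (@embR p) h2] c) ->
  (forall a, a \in C1v C <-> gen_ideal (lam + mu) [:: h1] a) /\
  (forall b, b \in Cv C <-> gen_ideal lam [:: h2] b).
Proof.
move=> _ _ _ _ _ _ _ _ HC; split => a; split.
- rewrite inE => /existsP [b /HC [A [q [_ Heq]]]].
  exists [:: map_poly (@phi1 p) A`_0], (map_poly (@phi1 p) q); split => //.
  have -> : a = map_mx (@phi1 p) (\row_i (vR p * embR (a 0 i) + (1 - vR p) * embR (b 0 i))).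
    by apply/rowP => i; rewrite !mxE /phi1 /=; ring.
  rewrite -wpoly_map Heq !big_ord_recl !big_ord0 /= !addr0.
  by rewrite map_gen !phi1_emb /= phi1_v phi1_1v phi1_th mul1r mul0r mulr0 addr0.
- move=> [A [q [_ Heq]]]; rewrite inE; apply/existsP; exists 0; apply/HC.
  exists [:: map_poly (@embR p) A`_0; 0], ((vR p)%:P * map_poly (@embR p) q); split => //.
  rewrite wpoly_row wpoly0 rmorph0 mulr0 addr0 Heq.
  rewrite !big_ord_recl big_ord0 /= big_ord0 addr0 mul0r map_gen2 /= addr0; apply: lift_gen.
  by apply: rv_eq => /=; ring.
- rewrite inE => /existsP [b /HC [A [q [_ Heq]]]].
  exists [:: map_poly (@phi0 p) A`_1], (map_poly (@phi0 p) q); split => //.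
  have -> : a = map_mx (@phi0 p) (\row_i (vR p * embR (b 0 i) + (1 - vR p) * embR (a 0 i))).
    by apply/rowP => i; rewrite !mxE /phi0 /=; ring.
  rewrite -wpoly_map Heq !big_ord_recl !big_ord0 /= !addr0.
  by rewrite map_gen !phi0_emb /= subr0 mul0r mulr0 add0r mul1r.
- move=> [A [q [_ Heq]]]; rewrite inE; apply/existsP; exists 0; apply/HC.
  exists [:: 0; map_poly (@embR p) A`_0], ((1 - vR p)%:P * map_poly (@embR p) q); split => //.
  rewrite wpoly_row wpoly0 rmorph0 mulr0 add0r Heq.
  rewrite !big_ord_recl big_ord0 /= big_ord0 addr0 mul0r add0r map_gen2 /=; apply: lift_gen.
by apply: rv_eq => /=; ring.
Qed.
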